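(* Let $X$ be a random variable, $Z$ a random variable jointly distributed with $X$, and $f,g$ real functions with $\mathbb{E}[f(X)^2],\mathbb{E}[g(X)^2]<\infty$ and $\operatorname{Var}[g(X)]>0$. If $\operatorname{Var}(\mathbb{E}[g(X)\mid Z])=0$, then $$\operatorname{Var}\mathbb{E}[f(X)\mid Z]\le\operatorname{Var}[f(X)]-\frac{\operatorname{Cov}(f(X),g(X))^2}{\operatorname{Var}[g(X)]}.$$ *)

(* Defs.v *)
From HB Require Import structures.
From mathcomp Require Import all_boot all_order all_algebra.
From mathcomp Require Import all_classical all_reals all_analysis.
Set Implicit Arguments. Unset Strict Implicit. Unset Printing Implicit Defensive.
Import Order.TTheory GRing.Theory Num.Theory.
Local Open Scope classical_set_scope.
Local Open Scope ring_scope.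

(* W is a version of the conditional expectation E[Y | Z] (conditioning on
   the sigma-algebra generated by Z : T -> S):
   W is sigma(Z)-measurable (written, via Doob-Dynkin, as W = h o Z with h
   measurable), integrable, and for every measurable B,
   E[Y 1_{Z in B}] = E[W 1_{Z in B}]. *)
Definition is_cond_exp {d} {T : measurableType d} {dS} {S : measurableType dS}
  {R : realType} (P : probability T R) (Y : T -> R) (Z : T -> S) (W : T -> R) :=
  (exists h : S -> R, measurable_fun setT h /\ W = h \o Z) /\
  P.-integrable setT (EFin \o W) /\
  (forall B : set S, measurable B ->
     (\int[P]_(w in Z @^-1` B) (Y w)%:E = \int[P]_(w in Z @^-1` B) (W w)%:E)%E).

(* Main.v *)
Require Import Defs.
From HB Require Import structures.
From mathcomp Require Import all_boot all_order all_algebra.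
From mathcomp Require Import all_classical all_reals all_analysis.
From mathcomp Require Import measurable_realfun.
From mathcomp Require Import ring lra.
Import Order.TTheory GRing.Theory Num.Theory.
Local Open Scope classical_set_scope.
Local Open Scope ring_scope.
Local Open Scope ereal_scope.

Import HBSimple HBNNSimple.
Section CL.
Context d (T : measurableType d) (R : realType) (mu : {measure set T -> \bar R}).
Context dS (S : measurableType dS) (Z : T -> S) (mZ : measurable_fun setT Z).
Context (Y W : T -> R).
Hypothesis iY : mu.-integrable setT (EFin \o Y).
Hypothesis iW : mu.-integrable setT (EFin \o W).
Hypothesis hYW : forall B : set S, measurable B ->
  \int[mu]_(w in Z @^-1` B) (Y w)%:E = \int[mu]_(w in Z @^-1` B) (W w)%:E.

Let mY : measurable_fun setT Y.
Proof. by move/integrableP: iY => [/measurable_EFinP]. Qed.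
Let mW : measurable_fun setT W.
Proof. by move/integrableP: iW => [/measurable_EFinP]. Qed.

Let ind_int (V : T -> R) (iV : mu.-integrable setT (EFin \o V)) (y : R) (A : set S) :
  measurable A ->
  \int[mu]_t (V t * (y * \1_A (Z t)))%:E = y%:E * \int[mu]_(t in Z @^-1` A) (V t)%:E.
Proof.
move=> mA.
have mZA : measurable (Z @^-1` A) by rewrite -[Z @^-1` A]setTI; exact: mZ.
rewrite -integralZl//; last first.
  exact: (integrableS measurableT mZA (@subsetT _ _) iV).
rewrite [RHS]integral_mkcond; apply: eq_integral => t _ /=.
rewrite /patch indicE; case: (boolP (t \in Z @^-1` A)) => tA.
  by rewrite mem_set ?mulr1 ?EFinM 1?muleC//; move: tA; rewrite inE.
rewrite memNset ?mulr0 ?mulr0//.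
by move: tA; rewrite notin_setE.
Qed.

Let sf_int (V : T -> R) (iV : mu.-integrable setT (EFin \o V)) (s : {nnsfun S >-> R}) :
  \int[mu]_t (V t * s (Z t))%:E = \sum_(y <- finmap.enum_fset (fset_set (range s)))
     y%:E * \int[mu]_(t in Z @^-1` (s @^-1` [set y])) (V t)%:E.
Proof.
have mV : measurable_fun setT V by move/integrableP: iV => [/measurable_EFinP].
under eq_integral => t _ do rewrite fimfunE fsbig_finite// mulr_sumr -sumEFin.
rewrite integral_sum//; last first.
  move=> y.
  apply: (@le_integrable _ _ _ _ _ measurableT _ (fun t => (y * V t)%:E)) => //.
  - apply/measurable_EFinP; apply: measurable_funM => //.
    apply: measurable_funM => //.
    apply: measurableT_comp => //.
  - move=> t _ /=; rewrite indicE; case: (_ \in _) => /=.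
      by rewrite mulr1 mulrC.
    by rewrite !mulr0 normr0 lee_fin.
  - by under eq_fun do rewrite EFinM; apply: integrableZl.
by apply: eq_bigr => y _; apply: ind_int.
Qed.


Let sfl (s : {nnsfun S >-> R}) :
  \int[mu]_t (Y t * s (Z t))%:E = \int[mu]_t (W t * s (Z t))%:E.
Proof.
rewrite !sf_int//; apply: eq_bigr => y _; rewrite hYW//; exact: measurable_funPTI.
Qed.

Let clpos (phi : S -> R) (mphi : measurable_fun setT phi)
  (phi0 : forall z, (0 <= phi z)%R)
  (iYp : mu.-integrable setT (fun t => (Y t * phi (Z t))%:E))
  (iWp : mu.-integrable setT (fun t => (W t * phi (Z t))%:E)) :
  \int[mu]_t (Y t * phi (Z t))%:E = \int[mu]_t (W t * phi (Z t))%:E.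
Proof.
have mEp : measurable_fun setT (EFin \o phi) by exact/measurable_EFinP.
have Ep0 : forall z, setT z -> 0 <= (EFin \o phi) z by move=> z _; rewrite lee_fin.
pose sn := nnsfun_approx measurableT mEp.
have sn_le n z : (sn n z <= phi z)%R.
  by rewrite /sn nnsfun_approxE -lee_fin; exact: (le_approx n Ep0).
have sn_ge0 n z : (0 <= sn n z)%R by apply: fun_ge0.
have cv z : (EFin \o sn^~ z) @ \oo --> (phi z)%:E.
  exact: (@cvg_nnsfun_approx _ _ _ _ measurableT _ mEp Ep0 z I).
have dct (V : T -> R) (mV : measurable_fun setT V) (iVp : mu.-integrable setT (fun t => (V t * phi (Z t))%:E)) :
  (fun n => \int[mu]_t (V t * sn n (Z t))%:E) @ \oo --> \int[mu]_t (V t * phi (Z t))%:E.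
  have [] := @dominated_convergence _ _ _ mu setT measurableT
    (fun n t => (V t * sn n (Z t))%:E) (fun t => (V t * phi (Z t))%:E)
    (abse \o (fun t => (V t * phi (Z t))%:E)).
  - move=> n; apply/measurable_EFinP; apply: measurable_funM => //.
    exact: measurableT_comp.
  - by move/integrableP: iVp => [].
  - apply: aeW => t _.
    under eq_fun do rewrite EFinM.
    rewrite EFinM; apply: cvgeZl => //; exact: cv.
  - exact: integrable_abse.
  - apply: aeW => t n _ /=; rewrite lee_fin !normrM ler_wpM2l//.
    by rewrite !ger0_norm.
  by [].
have h1 := dct Y mY iYp; have h2 := dct W mW iWp.
have e : (fun n => \int[mu]_t (Y t * sn n (Z t))%:E) = (fun n => \int[mu]_t (W t * sn n (Z t))%:E).
  by apply: funext => n; exact: sfl.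
rewrite e in h1.
by rewrite -(cvg_lim _ h1)// -(cvg_lim _ h2).
Qed.

Lemma cond_exp_test (phi : S -> R) (mphi : measurable_fun setT phi)
  (iYp : mu.-integrable setT (fun t => (Y t * phi (Z t))%:E))
  (iWp : mu.-integrable setT (fun t => (W t * phi (Z t))%:E)) :
  \int[mu]_t (Y t * phi (Z t))%:E = \int[mu]_t (W t * phi (Z t))%:E.
Proof.
have pE z : phi z = ((funrpos phi) z - (funrneg phi) z)%R.
  by have /(congr1 (fun f => f z)) := funrposBneg phi.
have hD z : ((funrpos phi) z + (funrneg phi) z = `|phi z|)%R.
  by have /(congr1 (fun f => f z)) := funrposDneg phi.
have pl z : ((funrpos phi) z <= `|phi z|)%R.
  by rewrite -hD lerDl funrneg_ge0.
have nl z : ((funrneg phi) z <= `|phi z|)%R.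
  by rewrite -hD lerDr funrpos_ge0.
have mp : measurable_fun setT (funrpos phi) by exact: measurable_funrpos.
have mn : measurable_fun setT (funrneg phi) by exact: measurable_funrneg.
have ip (V : T -> R) (mV : measurable_fun setT V) (ps : S -> R) (mps : measurable_fun setT ps)
    (hps : forall z, (`|ps z| <= `|phi z|)%R)
    (iVp : mu.-integrable setT (fun t => (V t * phi (Z t))%:E)) :
    mu.-integrable setT (fun t => (V t * ps (Z t))%:E).
  apply: (@le_integrable _ _ _ _ _ measurableT _ _ _ _ iVp).
    apply/measurable_EFinP; apply: measurable_funM => //; exact: measurableT_comp.
  by move=> t _; rewrite lee_fin !normrM ler_wpM2l.
have hp z : (`|(funrpos phi) z| <= `|phi z|)%R by rewrite ger0_norm ?funrpos_ge0.
have hn z : (`|(funrneg phi) z| <= `|phi z|)%R by rewrite ger0_norm ?funrneg_ge0.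
have e (V : T -> R) (mV : measurable_fun setT V)
    (iVp : mu.-integrable setT (fun t => (V t * phi (Z t))%:E)) :
    \int[mu]_t (V t * phi (Z t))%:E =
    \int[mu]_t (V t * (funrpos phi) (Z t))%:E - \int[mu]_t (V t * (funrneg phi) (Z t))%:E.
  rewrite -integralB_EFin//; first last.
  - exact: (ip V mV _ mn hn iVp).
  - exact: (ip V mV _ mp hp iVp).
  by apply: eq_integral => t _; rewrite -EFinB -mulrBr -pE.
rewrite (e Y mY iYp) (e W mW iWp).
rewrite (clpos (funrpos phi) mp (@funrpos_ge0 _ _ phi) (ip Y mY _ mp hp iYp) (ip W mW _ mp hp iWp)).
by rewrite (clpos (funrneg phi) mn (@funrneg_ge0 _ _ phi) (ip Y mY _ mn hn iYp) (ip W mW _ mn hn iWp)).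
Qed.

End CL.

Section L2.
Context d (T : measurableType d) (R : realType) (P : probability T R).

Lemma L2_of_sqr (V : T -> R) : measurable_fun setT V ->
  P.-integrable setT (EFin \o (fun t => (V t ^+ 2)%R)) -> V \in Lfun P 2%:E.
Proof.
move=> mV /integrableP [_ fin].
rewrite inE; apply/andP; split; first by rewrite inE.
rewrite inE /= /finite_norm unlock /=.
rewrite poweR_lty//; apply: le_lt_trans fin.
apply: ge0_le_integral => //.
- apply/measurable_EFinP; apply: (@measurableT_comp _ _ _ _ _ _ (fun x : R => x `^ 2)%R) => //.
  exact: measurableT_comp.
- apply: measurableT_comp => //; apply/measurable_EFinP; exact: measurable_funX.
- by move=> t _ /=; rewrite lee_fin normrX powR_mulrn.
Qed.

Context dS (S : measurableType dS) (Z : T -> S) (mZ : measurable_fun setT Z).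
Context (Y : T -> R) (h : S -> R) (mh : measurable_fun setT h).
Hypothesis Y2 : Y \in Lfun P 2%:E.
Hypothesis iW : P.-integrable setT (EFin \o (h \o Z)).
Hypothesis hYW : forall B : set S, measurable B ->
  \int[P]_(w in Z @^-1` B) (Y w)%:E = \int[P]_(w in Z @^-1` B) ((h \o Z) w)%:E.

Let mW : measurable_fun setT (h \o Z).
Proof. exact: measurableT_comp. Qed.

Let iY : P.-integrable setT (EFin \o Y).
Proof.
apply/Lfun1_integrable; apply: Lfun_subset12 => //.
exact: fin_num_measure.
Qed.

Let mY : measurable_fun setT Y.
Proof. by move/integrableP: iY => [/measurable_EFinP]. Qed.

Let ibd (V : T -> R) (iV : P.-integrable setT (EFin \o V)) (phi : S -> R)
  (mphi : measurable_fun setT phi) (c : R) (hc : forall z, (`|phi z| <= c)%R) :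
  P.-integrable setT (fun t => (V t * phi (Z t))%:E).
Proof.
have mV : measurable_fun setT V by move/integrableP: iV => [/measurable_EFinP].
apply: (@le_integrable _ _ _ _ _ measurableT _ (fun t => (c * V t)%:E)).
- apply/measurable_EFinP; apply: measurable_funM => //; exact: measurableT_comp.
- move=> t _; rewrite lee_fin !normrM mulrC ler_wpM2r//.
  by rewrite (le_trans (hc (Z t))) // ler_norm.
- by under eq_fun do rewrite EFinM; apply: integrableZl.
Qed.

Let A (n : nat) := h @^-1` `[(- n%:R)%R, (n%:R)%R]%classic.
Let phin (n : nat) z := (h z * \1_(A n) z)%R.

Let mA n : measurable (A n).
Proof. by rewrite -[A n]setTI; apply: mh => //; exact: measurable_itv. Qed.

Let mphin n : measurable_fun setT (phin n).
Proof. apply: measurable_funM => //; exact: measurable_indic. Qed.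

Let phin_bd n z : (`|phin n z| <= n%:R)%R.
Proof.
rewrite /phin indicE; case: (boolP (z \in A n)) => zA; last by rewrite mulr0 normr0.
rewrite mulr1; move: zA; rewrite inE /A /= in_itv /= => /andP[h1 h2].
by rewrite ler_norml h1 h2.
Qed.

Let phin_sq n z : (h z * phin n z = phin n z ^+ 2)%R.
Proof.
rewrite /phin indicE; case: (z \in A n); by rewrite ?mulr1 ?mulr0 ?expr2 ?mulr0.
Qed.

Let iB (f g : T -> R) : P.-integrable setT (EFin \o f) -> P.-integrable setT (EFin \o g) ->
  P.-integrable setT (EFin \o (fun t => f t - g t)%R).
Proof.
move=> hf hg; apply: (eq_integrable measurableT _ _ _ (integrableB measurableT hf hg)).
by move=> t _ /=; rewrite EFinB.
Qed.

Let iZ (f : T -> R) (c : R) : P.-integrable setT (EFin \o f) ->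
  P.-integrable setT (EFin \o (fun t => c * f t)%R).
Proof.
move=> hf; apply: (eq_integrable measurableT _ _ _ (integrableZl measurableT c hf)).
by move=> t _ /=; rewrite EFinM.
Qed.

Let keyR n : (\int[P]_t ((phin n (Z t)) ^+ 2) <= \int[P]_t ((Y t) ^+ 2))%R.
Proof.
have iYp := ibd Y iY (phin n) (mphin n) n%:R (phin_bd n).
have iWp := ibd (h \o Z) iW (phin n) (mphin n) n%:R (phin_bd n).
have e1 := @cond_exp_test _ _ _ P _ _ Z mZ Y (h \o Z) iY iW hYW (phin n) (mphin n) iYp iWp.
have iP2 : P.-integrable setT (EFin \o (fun t => (phin n (Z t) ^+ 2)%R)).
  apply: (eq_integrable measurableT _ _ _ iWp) => t _ /=; by rewrite phin_sq.
have iY2 := Lfun2_integrable_sqr Y2.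
have e2 : (\int[P]_t (Y t * phin n (Z t)) = \int[P]_t ((phin n (Z t)) ^+ 2))%R.
  rewrite /Rintegral e1; congr fine; apply: eq_integral => t _; by rewrite /= phin_sq.
have ge : (0 <= \int[P]_t ((Y t - phin n (Z t)) ^+ 2))%R.
  by apply: Rintegral_ge0 => t _; exact: sqr_ge0.
have ex : (\int[P]_t ((Y t - phin n (Z t)) ^+ 2) =
    \int[P]_t ((Y t) ^+ 2) - (2 * \int[P]_t (Y t * phin n (Z t)) - \int[P]_t ((phin n (Z t)) ^+ 2)))%R.
  rewrite -RintegralZl// -RintegralB//; last exact: iZ.
  rewrite -RintegralB//; last by apply: iB => //; exact: iZ.
  by apply: eq_Rintegral => t _; rewrite sqrrB; ring.
move: ge; rewrite ex e2.
set a := (\int[P]_t ((phin n (Z t)) ^+ 2))%R.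
set b := (\int[P]_t ((Y t) ^+ 2))%R.
move=> ge; lra.
Qed.

Let iP2 n : P.-integrable setT (EFin \o (fun t => (phin n (Z t) ^+ 2)%R)).
Proof.
have iWp := ibd (h \o Z) iW (phin n) (mphin n) n%:R (phin_bd n).
apply: (eq_integrable measurableT _ _ _ iWp) => t _ /=; by rewrite phin_sq.
Qed.

Let key n : \int[P]_t ((phin n (Z t)) ^+ 2)%R%:E <= \int[P]_t ((Y t) ^+ 2)%R%:E.
Proof.
rewrite -(fineK (integrable_fin_num measurableT (iP2 n))).
rewrite -(fineK (integrable_fin_num measurableT (Lfun2_integrable_sqr Y2))).
by rewrite lee_fin; exact: keyR.
Qed.

Let AS n m : (n <= m)%N -> A n `<=` A m.
Proof.
move=> nm z; rewrite /A /= !in_itv /= => /andP[h1 h2].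
have nm' : (n%:R <= m%:R :> R)%R by rewrite ler_nat.
apply/andP; split; first by apply: le_trans h1; rewrite lerN2.
exact: le_trans h2 nm'.
Qed.

Let phin2E n z : (phin n z ^+ 2 = h z ^+ 2 * \1_(A n) z)%R.
Proof.
by rewrite /phin indicE; case: (z \in A n); rewrite ?mulr1 ?mulr0 ?expr2 ?mulr0.
Qed.

Lemma cond_exp_Lfun2 : (h \o Z) \in Lfun P 2%:E.
Proof.
apply: L2_of_sqr => //.
apply/integrableP; split.
  by apply/measurable_EFinP; exact: measurable_funX.
pose g' n t := ((phin n (Z t)) ^+ 2)%R%:E.
have mg' n : measurable_fun setT (g' n).
  apply/measurable_EFinP; apply: measurable_funX; exact: measurableT_comp.
have g'0 n t : setT t -> 0 <= g' n t by move=> _; rewrite lee_fin sqr_ge0.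
have nd t : setT t -> {homo g'^~ t : n m / (n <= m)%N >-> n <= m}.
  move=> _ n m nm; rewrite /g' lee_fin !phin2E !indicE.
  case: (boolP (Z t \in A n)) => ztn.
    by rewrite (mem_set (AS n m nm _ (set_mem ztn))).
  by rewrite mulr0 mulr_ge0 ?sqr_ge0.
have lim_t t : limn (g'^~ t) = ((h (Z t)) ^+ 2)%R%:E.
  have [N hN] : exists N : nat, (`|h (Z t)| <= N%:R)%R.
    by exists (Num.Def.archi_bound `|h (Z t)|); apply/ltW/archi_boundP.
  apply: lim_near_cst => //; apply: filterS (nbhs_infty_ge N) => m hm /=.
  rewrite /g' /phin indicE mem_set ?mulr1 //.
  rewrite /A /= in_itv /=; rewrite -ler_norml; apply: (le_trans hN).
  by rewrite ler_nat.
have mct := monotone_convergence P measurableT mg' g'0 nd.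
have -> : \int[P]_x `|(EFin \o (fun t => ((h \o Z) t ^+ 2)%R)) x| =
          \int[P]_x (fun x => limn (g'^~ x)) x.
  by apply: eq_integral => t _; rewrite lim_t /= ger0_norm// sqr_ge0.
rewrite mct; apply: (@le_lt_trans _ _ (\int[P]_t ((Y t) ^+ 2)%R%:E)).
  apply: lime_le.
    apply: ereal_nondecreasing_is_cvgn => n m nm.
    by apply: ge0_le_integral => // t _; [exact: g'0|exact: (nd t I n m nm)].
  by apply: nearW => n; exact: key.
have /integrableP[_ fin2] := Lfun2_integrable_sqr Y2.
have mY2 : measurable_fun setT (fun x => (Y x ^+ 2)%R%:E).
  by apply/measurable_EFinP; exact: measurable_funX.
apply: le_lt_trans fin2; apply: ge0_le_integral => //.
- by move=> t _; rewrite lee_fin sqr_ge0.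
- exact: measurableT_comp.
- by move=> t _ /=; rewrite lee_fin ler_norm.
Qed.

End L2.

Lemma corollary4_aux (d : measure_display) (T : measurableType d) (R : realType)
  (P : probability T R)
  (dX : measure_display) (SX : measurableType dX)
  (dZ : measure_display) (SZ : measurableType dZ)
  (X : T -> SX) (Z : T -> SZ) (f g : SX -> R)
  (cf cg : T -> R) :
  measurable_fun setT X -> measurable_fun setT Z ->
  (f \o X) \in Lfun P 2%:E -> (g \o X) \in Lfun P 2%:E ->
  ('V_P[g \o X] > 0)%E ->
  is_cond_exp P (f \o X) Z cf -> is_cond_exp P (g \o X) Z cg ->
  'V_P[cg] = 0%E ->
  ('V_P[cf] <= 'V_P[f \o X]
     - ((fine (covariance P (f \o X) (g \o X))) ^+ 2
          / fine 'V_P[g \o X])%:E)%E.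
Proof.
move=> mX mZ Yf2 Yg2 Vg0 [[hf [mhf ->]] [icf hfE]] [[hg [mhg ->]] [icg hgE]] Vcg0.
set Yf := f \o X; set Yg := g \o X; set Wf := hf \o Z; set Wg := hg \o Z.
have P1 : P setT \is a fin_num := fin_num_measure P _ measurableT.
have Wf2 : Wf \in Lfun P 2%:E := @cond_exp_Lfun2 _ _ _ P _ _ Z mZ _ _ mhf Yf2 icf hfE.
have Yf1 := Lfun_subset12 P1 Yf2.
have Yg1 := Lfun_subset12 P1 Yg2.
have Wf1 := Lfun_subset12 P1 Wf2.
have /Lfun1_integrable iYf := Yf1.
have /Lfun1_integrable iYg := Yg1.
have EB : 'E_P[Wf * Yf] = 'E_P[Wf * Wf].
  have i1 : P.-integrable setT (fun t => (Yf t * hf (Z t))%:E).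
    by apply/Lfun1_integrable; exact: Lfun2_mul_Lfun1.
  have i2 : P.-integrable setT (fun t => (Wf t * hf (Z t))%:E).
    by apply/Lfun1_integrable; exact: Lfun2_mul_Lfun1.
  have := @cond_exp_test _ _ _ P _ _ Z mZ _ _ iYf icf hfE _ mhf i1 i2.
  rewrite unlock => <-; apply: eq_integral => t _ /=; by rewrite mulrC.
have Wg1 : Wg \in Lfun P 1 by apply/Lfun1_integrable.
set c := fine 'E_P[Wg].
have cE : c%:E = 'E_P[Wg] by rewrite fineK// expectation_fin_num.
rewrite /variance unlock -/c in Vcg0. rewrite unlock in Vcg0.
have mWg : measurable_fun setT Wg by exact: measurableT_comp.
have ae0 : ae_eq P setT (fun w => (((hg \o Z \- cst c) * (hg \o Z \- cst c)) w)%:E) (cst 0).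
  apply/ae_eq_integral_abs => //.
    apply/measurable_EFinP; apply: measurable_funM; apply: measurable_funB => //.
  rewrite -Vcg0; apply: eq_integral => t _; rewrite gee0_abs // lee_fin /=.
  exact: mulr_ge0_le0 || (rewrite -expr2; exact: sqr_ge0).
have aeWg : {ae P, forall t, Wg t = c}.
  apply: filterS ae0 => t /(_ I) /= /eqP; rewrite eqe mulf_eq0 orbb subr_eq0.
  by move/eqP.
have mpre B : measurable B -> measurable (Z @^-1` B).
  by move=> mB; rewrite -[Z @^-1` B]setTI; exact: mZ.
have hYgc : forall B : set SZ, measurable B ->
    \int[P]_(w in Z @^-1` B) (Yg w)%:E = \int[P]_(w in Z @^-1` B) ((cst c \o Z) w)%:E.
  move=> B mB; rewrite hgE //; apply: ae_eq_integral => //.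
  - exact: mpre.
  - apply: measurable_funTS; exact/measurable_EFinP.
  - by apply/measurable_EFinP; apply: measurable_cst.
  - apply: filterS aeWg => t h _ /=; by rewrite -h.
have EYg : 'E_P[Yg] = c%:E.
  by rewrite cE unlock; have := hgE setT measurableT; rewrite preimage_setT.
have EfW : 'E_P[Wf] = 'E_P[Yf].
  by rewrite unlock; have := hfE setT measurableT; rewrite preimage_setT.
have icW : P.-integrable setT (EFin \o (cst c \o Z)).
  exact/Lfun1_integrable/Lfun_cst.
have EgW : 'E_P[Wf * Yg] = c%:E * 'E_P[Wf].
  have i1 : P.-integrable setT (fun t => (Yg t * hf (Z t))%:E).
    by apply/Lfun1_integrable; exact: Lfun2_mul_Lfun1.
  have i2 : P.-integrable setT (fun t => ((cst c \o Z) t * hf (Z t))%:E).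
    apply: (eq_integrable measurableT _ _ _ (integrableZl measurableT c icf)).
    by move=> t _ /=; rewrite EFinM.
  have := @cond_exp_test _ _ _ P _ _ Z mZ _ _ iYg icW hYgc _ mhf i1 i2.
  move=> e; rewrite unlock -integralZl//; transitivity (\int[P]_t (Yg t * hf (Z t))%:E).
    by apply: eq_integral => t _ /=; rewrite mulrC.
  by rewrite e; apply: eq_integral => t _ /=; rewrite EFinM.
have fEf := expectation_fin_num Yf1.
have fEW := expectation_fin_num Wf1.
have h1 : covariance P Wf (Yf \- Wf)%R = 0.
  rewrite covarianceBr // !covarianceE //; last 2 first.
  - exact: Lfun2_mul_Lfun1.
  - exact: Lfun2_mul_Lfun1.
  rewrite EB EfW subee // fin_numB; apply/andP; split; last by rewrite fin_numM.
  by apply: expectation_fin_num; exact: Lfun2_mul_Lfun1.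
have h2 : covariance P Wf Yg = 0.
  rewrite covarianceE //; last exact: Lfun2_mul_Lfun1.
  by rewrite EgW EYg muleC subee // fin_numM.
pose U := (Yf \- Wf)%R.
have U2 : U \in Lfun P 2%:E.
  by have /(_ (lee1n 2)) := rpredB Yf2 Wf2.
have eYf : Yf = (Wf \+ U)%R by apply/funext => t /=; rewrite addrC subrK.
have VYf : 'V_P[Yf] = 'V_P[Wf] + 'V_P[U].
  have h1' : covariance P Wf U = 0 := h1.
  by rewrite [in LHS]eYf varianceD // h1' mule0 adde0.
have CYf : covariance P Yf Yg = covariance P U Yg.
  by rewrite [in LHS]eYf covarianceDl // h2 add0e.
have U1 := Lfun_subset12 P1 U2.
have UYg1 : (U * Yg)%R \in Lfun P 1 := Lfun2_mul_Lfun1 U2 Yg2.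
have fW := variance_fin_num Wf2.
have fU := variance_fin_num U2.
have fg := variance_fin_num Yg2.
have fk := covariance_fin_num U1 Yg1 UYg1.
have CS1 := covariance_le U2 Yg2.
have U2N : (\- U)%R \in Lfun P 2%:E by rewrite rpredN.
have CS2 := covariance_le U2N Yg2.
rewrite covarianceNl // varianceN // in CS2.
have gU := variance_ge0 P U.
have Vg0' : 0 < 'V_P[Yg] := Vg0.
rewrite VYf CYf.
move: CS1 CS2 gU Vg0'.
rewrite -(fineK fW) -(fineK fU) -(fineK fg) -(fineK fk) /=.
set a := fine 'V_P[Wf]; set u := fine 'V_P[U]; set v := fine 'V_P[Yg].
set k := fine (covariance P U Yg).
rewrite -!EFinM !lee_fin lte_fin => CS1 CS2 u0 v0.
have s0 : (0 <= Num.sqrt u * Num.sqrt v)%R by rewrite mulr_ge0 ?sqrtr_ge0.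
have ss : ((Num.sqrt u * Num.sqrt v) ^+ 2 = u * v)%R.
  rewrite exprMn !sqr_sqrtr //; exact: ltW.
have k2 : (k ^+ 2 <= u * v)%R.
  rewrite -ss; move: CS1 CS2 s0; set s := (Num.sqrt u * Num.sqrt v)%R => CS1 CS2 s0.
  nra.
have : (k ^+ 2 / v <= u)%R by rewrite ler_pdivrMr.
lra.
Qed.

Local Close Scope ereal_scope.

Theorem corollary4 (d : measure_display) (T : measurableType d) (R : realType)
  (P : probability T R)
  (dX : measure_display) (SX : measurableType dX)
  (dZ : measure_display) (SZ : measurableType dZ)
  (X : T -> SX) (Z : T -> SZ) (f g : SX -> R)
  (cf cg : T -> R) :
  measurable_fun setT X -> measurable_fun setT Z ->
  (f \o X) \in Lfun P 2%:E -> (g \o X) \in Lfun P 2%:E ->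
  ('V_P[g \o X] > 0)%E ->
  is_cond_exp P (f \o X) Z cf -> is_cond_exp P (g \o X) Z cg ->
  'V_P[cg] = 0%E ->
  ('V_P[cf] <= 'V_P[f \o X]
     - ((fine (covariance P (f \o X) (g \o X))) ^+ 2
          / fine 'V_P[g \o X])%:E)%E.
Proof. exact: corollary4_aux. Qed.
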